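(* Let $p\in[1,\infty]$, let $Y$ be a complex Banach space, let $(\mathcal G,+)$ be a countable discrete group and $\mathbf X=\ell^p(\mathcal G,Y)$, with $\mathcal P$ and $\mathcal L(\mathbf X,\mathcal P)$ as in the context. Let $(\Omega,\mathcal G,\alpha)$ be a dynamical system and $A:\Omega\to\mathcal L(\mathbf X,\mathcal P)$ a family of operators over it. Then for all $\omega\in\Omega$, $$\sigma^{\mathrm{op}}(A(\omega))=\{A(\nu):\nu\in L(\omega)\}.$$
   Context: $(\mathcal G,+)$ is written additively but need not be abelian. Choose subsets $\mathcal G_n\subseteq\mathcal G$ with $\emptyset\neq\mathcal G_n\neq\mathcal G$, such that for each $m$ there is $N_m$ with $\mathcal G_m\subseteq\mathcal G_n$ for $n\ge N_m$, and $\bigcup_n\mathcal G_n=\mathcal G$; $P_n$ is multiplication by $\mathbf 1_{\mathcal G_n}$, $\mathcal P=(P_n)$. $K\in\mathcal L(\mathbf X)$ is $\mathcal P$-compact if $\|K(I-P_n)\|\to0$ and $\|(I-P_n)K\|\to0$; $\mathcal K(\mathbf X,\mathcal P)$ is the set of these and $\mathcal L(\mathbf X,\mathcal P)=\{A\in\mathcal L(\mathbf X):AK,KA\in\mathcal K(\mathbf X,\mathcal P)\ \forall K\in\mathcal K(\mathbf X,\mathcal P)\}$. $(A_n)$ converges $\mathcal P$-strongly to $A$ ($\mathcal P\text{-}\lim A_n=A$) if $\|K(A_n-A)\|+\|(A_n-A)K\|\to0$ for all $K\in\mathcal K(\mathbf X,\mathcal P)$. $V_gx=(x_{h+g})_{h\in\mathcal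 G}$. $g_n\to\infty$ means $(g_n)$ eventually leaves every finite subset of $\mathcal G$. For $B\in\mathcal L(\mathbf X,\mathcal P)$ and $g=(g_n)$ with $g_n\to\infty$, the limit operator is $B_g:=\mathcal P\text{-}\lim V_{g_n}BV_{-g_n}$ if it exists; $\sigma^{\mathrm{op}}(B)$ (operator spectrum) is the set of all limit operators of $B$. A dynamical system $(\Omega,\mathcal G,\alpha)$: $\Omega$ compact metric space, $\alpha$ maps $\mathcal G$ to homeomorphisms of $\Omega$ with $\alpha(g+h)=\alpha(g)\circ\alpha(h)$. $L(\omega)=\{\nu\in\Omega:\exists g_n\to\infty,\ \alpha(g_n)(\omega)\to\nu\}$. A family of operators over $(\Omega,\mathcal G,\alpha)$ is $A:\Omega\to\mathcal L(\mathbf X,\mathcal P)$ with $A(\alpha(g)(\omega))=V_gA(\omega)V_{-g}$ for all $\omega,g$, and such that $\omega_n\to\omega$ implies $\mathcal P\text{-}\lim A(\omega_n)=A(\omega)$. *)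

(* Defs.v *)
From HB Require Import structures.
From mathcomp Require Import all_boot all_algebra.
From mathcomp Require Import all_classical all_reals all_analysis.
From mathcomp Require Import complex.
Import GRing.Theory Num.Theory.

Set Implicit Arguments.
Unset Strict Implicit.
Unset Printing Implicit Defensive.

Local Open Scope classical_set_scope.
Local Open Scope ring_scope.

Record cgroup := CGroup {
  gcar :> countType;
  gadd : gcar -> gcar -> gcar;
  gopp : gcar -> gcar;
  gzero : gcar;
  gaddA : forall a b c, gadd a (gadd b c) = gadd (gadd a b) c;
  gadd0g : forall a, gadd gzero a = a;
  gaddg0 : forall a, gadd a gzero = a;
  gaddNg : forall a, gadd (gopp a) a = gzero;
  gaddgN : forall a, gadd a (gopp a) = gzero }.

Definition to_infty (G : cgroup) (gs : nat -> G) : Prop :=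
  forall F : set G, finite_set F -> \forall n \near \oo, ~ F (gs n).

Section Lp.
Variables (R : realType) (G : cgroup) (Y : completeNormedModType R[i]).
Variable (p : \bar R).

Definition nY (y : Y) : R := complex.Re `|y|.

(* the l^p(G,Y) norm (extended-real valued; +oo if the sequence is not in l^p) *)
Definition lpnorm (x : G -> Y) : \bar R :=
  match p with
  | r%:E => ((\esum_(g in [set: G]) ((nY (x g)) `^ r)%:E) `^ r^-1)%E
  | +oo%E => ereal_sup (range (fun g => (nY (x g))%:E))
  | -oo%E => 0%E
  end.

Definition inX (x : G -> Y) : Prop := (lpnorm x < +oo)%E.

(* operators are represented as maps on G -> Y; only their action on X matters *)
Definition op := (G -> Y) -> (G -> Y).

Definition opnorm (T : op) : \bar R :=
  ereal_sup [set lpnorm (T x) | x in [set x | inX x /\ (lpnorm x <= 1)%E]].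

Definition bounded_op (T : op) : Prop :=
  [/\ forall x, inX x -> inX (T x),
      forall (a : R[i]) x y, inX x -> inX y ->
        T (fun g => a *: x g + y g) = (fun g => a *: T x g + T y g)
    & (opnorm T < +oo)%E].

Definition op_eq (S T : op) : Prop := forall x, inX x -> S x = T x.

Definition opsub (S T : op) : op := fun x g => S x g - T x g.

Variable Gn : nat -> set G.

Definition Pn (n : nat) : op := fun x g => if `[< Gn n g >] then x g else 0.
Definition IminusPn (n : nat) : op := fun x g => x g - Pn n x g.

Definition Pcompact (K : op) : Prop :=
  [/\ bounded_op K,
      (fun n => opnorm (K \o IminusPn n)) @ \oo --> 0%E
    & (fun n => opnorm (IminusPn n \o K)) @ \oo --> 0%E].

Definition LXP (A : op) : Prop :=
  bounded_op A /\ forall K, Pcompact K -> Pcompact (A \o K) /\ Pcompact (K \o A).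

Definition Plim (An : nat -> op) (B : op) : Prop :=
  bounded_op B /\
  forall K, Pcompact K ->
    (fun n => opnorm (K \o opsub (An n) B) + opnorm (opsub (An n) B \o K))%E
      @ \oo --> 0%E.

Definition shiftV (g : G) : op := fun x h => x (gadd h g).

(* Bg is a limit operator of B, i.e. Bg belongs to the operator spectrum of B *)
Definition limop (B Bg : op) : Prop :=
  exists gs : nat -> G, to_infty gs /\
    Plim (fun n => shiftV (gs n) \o B \o shiftV (gopp (gs n))) Bg.

End Lp.

Definition admissible_Gn (G : cgroup) (Gn : nat -> set G) : Prop :=
  [/\ forall n, Gn n != set0 /\ Gn n != setT,
      forall m, exists N, forall n, (N <= n)%N -> Gn m `<=` Gn n
    & \bigcup_n Gn n = setT].

Definition dyn_system (R : realType) (G : cgroup) (Om : pseudoMetricType R)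
    (alpha : G -> Om -> Om) : Prop :=
  [/\ hausdorff_space Om, compact [set: Om],
      forall g, continuous (alpha g) /\
        exists beta : Om -> Om, [/\ cancel (alpha g) beta, cancel beta (alpha g)
                                  & continuous beta]
    & forall g h, alpha (gadd g h) = alpha g \o alpha h].

Definition limset (R : realType) (G : cgroup) (Om : pseudoMetricType R)
    (alpha : G -> Om -> Om) (w nu : Om) : Prop :=
  exists gs : nat -> G, to_infty gs /\ (fun n => alpha (gs n) w) @ \oo --> nu.

Definition op_family (R : realType) (G : cgroup) (Y : completeNormedModType R[i])
    (p : \bar R) (Gn : nat -> set G) (Om : pseudoMetricType R)
    (alpha : G -> Om -> Om) (A : Om -> op G Y) : Prop :=
  [/\ forall w, LXP p Gn (A w),
      forall w g, op_eq p (A (alpha g w))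
                    (shiftV g \o A w \o shiftV (gopp g))
    & forall (ws : nat -> Om) w, ws @ \oo --> w ->
        Plim p Gn (fun n => A (ws n)) (A w)].

(* Main.v *)
Require Import Defs.
From mathcomp Require Import all_boot all_algebra.
From mathcomp Require Import all_classical all_reals all_analysis.
From mathcomp Require Import complex.
From mathcomp Require Import all_order.
Import Order.TTheory GRing.Theory Num.Theory.

Local Open Scope classical_set_scope.
Local Open Scope ring_scope.

Section Aux.
Variables (R : realType) (G : cgroup) (Y : completeNormedModType R[i]).

Lemma normY (y : Y) : `|y| = (nY y)%:C%C.
Proof.
rewrite /nY RRe_real //; exact: ger0_real.
Qed.

Lemma nY_ge0 (y : Y) : 0 <= nY y.
Proof. by rewrite -lecR -normY (normr_ge0 y). Qed.

Lemma nY0 : nY (0 : Y) = 0.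
Proof. by rewrite /nY normr0. Qed.

Lemma nY_eq0 (y : Y) : nY y = 0 -> y = 0.
Proof. by move=> h; apply/normr0_eq0; rewrite normY h. Qed.

Lemma nY_triangle (a b : Y) : nY (a + b) <= nY a + nY b.
Proof. by rewrite -lecR rmorphD /= -!normY ler_normD. Qed.

Lemma nYN (a : Y) : nY (- a) = nY a.
Proof. by rewrite /nY normrN. Qed.

Lemma nYB (a b : Y) : nY (a - b) = nY (b - a).
Proof. by rewrite -nYN opprB. Qed.

Lemma nYZ (c : R) (y : Y) : 0 <= c -> nY (c%:C%C *: y) = c * nY y.
Proof.
move=> c0; apply: complexI; rewrite -normY normrZ normY rmorphM /=; congr (_ * _).
by rewrite normc_def /= expr0n /= addr0 sqrtr_sqr ger0_norm.
Qed.
End Aux.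
Arguments normY {R Y}.
Arguments nY_ge0 {R Y}.
Arguments nY0 {R Y}.
Arguments nY_eq0 {R Y}.
Arguments nY_triangle {R Y}.
Arguments nYN {R Y}.
Arguments nYB {R Y}.
Arguments nYZ {R Y}.

Section LpFacts.
Variables (R : realType) (G : cgroup) (Y : completeNormedModType R[i]).

Lemma esumZ (S : set G) (c : R) (f : G -> \bar R) : 0 <= c ->
  (forall i, 0 <= f i)%E ->
  (\esum_(i in S) (c%:E * f i) = c%:E * \esum_(i in S) f i)%E.
Proof.
move=> c0 f0; rewrite /esum -ereal_supZl //; last first.
  by apply/set0P; exists 0%E; exists set0; [exact: fsets_set0|rewrite fsbig_set0].
congr ereal_sup; apply/seteqP; split => [y [A [finA AS] <-]|].
  exists (\sum_(i \in A) f i)%E; first by exists A.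
  by rewrite !fsbig_finite // ge0_sume_distrr.
move=> _ [z [A [finA AS] <-] <-].
by exists A => //; rewrite !fsbig_finite // ge0_sume_distrr.
Qed.

Lemma lpnorm_ge0 (p : \bar R) (hp : (1%:E <= p)%E) (x : G -> Y) : (0 <= lpnorm p x)%E.
Proof.
rewrite /lpnorm; case: p hp => [r| |] //= _.
  exact: poweR_ge0.
apply: le_trans (ereal_sup_ubound _); last by exists (gzero G).
by rewrite lee_fin nY_ge0.
Qed.

Lemma lpnorm_pt (p : \bar R) (hp : (1%:E <= p)%E) (x : G -> Y) g : ((nY (x g))%:E <= lpnorm p x)%E.
Proof.
rewrite /lpnorm; case: p hp => [r| |] //= r1.
  rewrite lee_fin in r1.
  have r0 : 0 < r by apply: lt_le_trans r1.
  have -> : (nY (x g))%:E = (((nY (x g)) `^ r)%:E `^ r^-1)%E.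
    by rewrite poweR_EFin -powRrM mulfV ?gt_eqF // powRr1 // nY_ge0.
  apply: gt0_ler_poweR.
  - by rewrite invr_ge0 ltW.
  - by rewrite in_itv /= lee_fin powR_ge0 leey.
  - by rewrite in_itv /= esum_ge0 ?leey // => i _; rewrite lee_fin powR_ge0.
  apply: esum_ge; exists [set g]; first by split => //; exact: finite_set1.
  by rewrite fsbig_set1.
by apply: ereal_sup_ubound; exists g.
Qed.

Lemma lpnorm_le (p : \bar R) (hp : (1%:E <= p)%E) (x y : G -> Y) : (forall g, nY (x g) <= nY (y g)) ->
  (lpnorm p x <= lpnorm p y)%E.
Proof.
move=> xy; rewrite /lpnorm; case: p hp => [r| |] //= r1.
  rewrite lee_fin in r1.
  have r0 : 0 < r by apply: lt_le_trans r1.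
  apply: gt0_ler_poweR.
  - by rewrite invr_ge0 ltW.
  - by rewrite in_itv /= esum_ge0 ?leey // => i _; rewrite lee_fin powR_ge0.
  - by rewrite in_itv /= esum_ge0 ?leey // => i _; rewrite lee_fin powR_ge0.
  apply: le_esum => i _; rewrite lee_fin ge0_ler_powR // ?ltW //.
  - by rewrite nnegrE nY_ge0.
  - by rewrite nnegrE nY_ge0.
apply: ge_ereal_sup => _ [g _ <-]; apply: le_trans (ereal_sup_ubound _); last by exists g.
by rewrite lee_fin.
Qed.

Lemma lpnorm0 (p : \bar R) (hp : (1%:E <= p)%E) : lpnorm p (fun _ : G => (0 : Y)) = 0%E.
Proof.
rewrite /lpnorm; case: p hp => [r| |] //= r1.
  rewrite lee_fin in r1.
  have r0 : 0 < r by apply: lt_le_trans r1.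
  rewrite esum1 ?poweR0r ?invr_eq0 ?gt_eqF // => i _.
  by rewrite nY0 powR0 // gt_eqF.
rewrite nY0 (_ : range _ = [set 0%E]) ?ereal_sup1 //.
by apply/seteqP; split => [_ [g _ <-]|_ ->] //; exists (gzero G).
Qed.

Lemma lpnormZ (p : \bar R) (hp : (1%:E <= p)%E) (c : R) (x : G -> Y) : 0 < c ->
  lpnorm p (fun g => c%:C%C *: x g) = (c%:E * lpnorm p x)%E.
Proof.
move=> c0; rewrite /lpnorm; case: p hp => [r| |] //= r1.
  rewrite lee_fin in r1.
  have r0 : 0 < r by apply: lt_le_trans r1.
  under eq_esum do rewrite nYZ ?ltW //.
  under eq_esum do rewrite (powRM _ (ltW c0) (nY_ge0 _)) EFinM.
  rewrite esumZ ?powR_ge0 //; last by move=> i; rewrite lee_fin powR_ge0.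
  rewrite poweRM ?lee_fin ?powR_ge0 ?esum_ge0 //; last by move=> i _; rewrite lee_fin powR_ge0.
  by rewrite poweR_EFin -powRrM mulfV ?gt_eqF // powRr1 // ltW.
under eq_fun do rewrite nYZ ?ltW //.
under eq_fun do rewrite EFinM.
rewrite -ereal_supZl ?ltW //; last by apply/set0P; exists (nY (x (gzero G)))%:E; exists (gzero G).
by rewrite -image_comp.
Qed.

End LpFacts.
Arguments esumZ {R G}.
Arguments lpnorm_ge0 {R G Y}.
Arguments lpnorm_pt {R G Y}.
Arguments lpnorm_le {R G Y}.
Arguments lpnorm0 {R G Y}.
Arguments lpnormZ {R G Y}.

Section OpFacts.
Variables (R : realType) (G : cgroup) (Y : completeNormedModType R[i]).
Implicit Types (T S : op G Y) (x : G -> Y).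

Lemma inX0 p (hp : (1%:E <= p)%E) : inX p (fun _ : G => (0 : Y)).
Proof. by rewrite /inX lpnorm0. Qed.

Lemma inX_scale p (hp : (1%:E <= p)%E) (c : R) x : 0 < c -> inX p x ->
  inX p (fun g => c%:C%C *: x g).
Proof.
move=> c0; rewrite /inX lpnormZ //; have := lpnorm_ge0 p hp x.
by case: (lpnorm p x) => //= l _ _; rewrite -EFinM ltry.
Qed.

Lemma opnorm_ge p T x : inX p x -> (lpnorm p x <= 1)%E ->
  (lpnorm p (T x) <= opnorm p T)%E.
Proof. by move=> hx h1; apply: ereal_sup_ubound; exists x. Qed.

Lemma opnorm_ge0 p (hp : (1%:E <= p)%E) T : (0 <= opnorm p T)%E.
Proof.
apply: le_trans (lpnorm_ge0 p hp (T (fun _ => 0))) _.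
by apply: opnorm_ge; [exact: inX0|rewrite lpnorm0].
Qed.

Lemma opnorm_ext p S T : (forall x, inX p x -> S x = T x) ->
  opnorm p S = opnorm p T.
Proof.
move=> e; rewrite /opnorm; congr ereal_sup; apply/seteqP.
by split => y [x hx <-]; exists x => //; rewrite e //; case: hx.
Qed.

Lemma opnorm_zero p (hp : (1%:E <= p)%E) : opnorm p (fun (_ : G -> Y) (_ : G) => (0 : Y)) = 0%E.
Proof.
rewrite /opnorm (_ : [set _ | _ in _] = [set 0%E]) ?ereal_sup1 //.
apply/seteqP; split => [y [x _ <-]|y ->] /=; first by rewrite lpnorm0.
exists (fun _ => 0); last by rewrite lpnorm0.
by split; [exact: inX0|rewrite lpnorm0].
Qed.

Lemma bo_zero p (hp : (1%:E <= p)%E) T : bounded_op p T ->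
  T (fun _ => 0) = (fun _ => 0).
Proof.
case=> _ lin _; have := lin 1 _ _ (inX0 _ hp) (inX0 _ hp).
rewrite (_ : (fun g => 1 *: (0 : Y) + 0) = fun _ => 0); last first.
  by apply/funext => g; rewrite scaler0 addr0.
move=> e; apply/funext => g; have := congr1 (fun f => f g) e => /=.
rewrite scale1r => /eqP; rewrite -{1}[T _ g]addr0 eq_sym => /eqP /addrI.
by move=> ->.
Qed.

Lemma bo_scale p (hp : (1%:E <= p)%E) T a x : bounded_op p T -> inX p x ->
  T (fun g => a *: x g) = fun g => a *: T x g.
Proof.
move=> hT hx; have := hT; case=> _ lin _; have := lin a _ _ hx (inX0 _ hp).
rewrite (bo_zero _ hp _ hT).
rewrite (_ : (fun g => a *: x g + 0) = fun g => a *: x g); last first.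
  by apply/funext => g; rewrite addr0.
move=> ->; apply/funext => g; by rewrite addr0.
Qed.

End OpFacts.
Arguments inX0 {R G Y}.
Arguments inX_scale {R G Y}.
Arguments opnorm_ge {R G Y}.
Arguments opnorm_ge0 {R G Y}.
Arguments opnorm_ext {R G Y}.
Arguments opnorm_zero {R G Y}.
Arguments bo_zero {R G Y}.
Arguments bo_scale {R G Y}.

Section PcFacts.
Variables (R : realType) (G : cgroup) (Y : completeNormedModType R[i]).
Variables (p : \bar R) (Gn : nat -> set G).
Hypothesis hp : (1%:E <= p)%E.
Hypothesis hG : admissible_Gn Gn.

Lemma Pn_bounded m : bounded_op p (Pn (Y:=Y) Gn m).
Proof.
have le1 (x : G -> Y) : (lpnorm p (Pn Gn m x) <= lpnorm p x)%E.
  apply: lpnorm_le => // g; rewrite /Pn; case: ifP => // _.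
  by rewrite nY0 nY_ge0.
split.
- by move=> x; rewrite /inX; apply: le_lt_trans (le1 x).
- move=> a x y _ _; apply/funext => g; rewrite /Pn; case: ifP => //.
  by rewrite scaler0 addr0.
- apply: le_lt_trans (ltry 1); apply: ge_ereal_sup => _ [x [hx h1] <-].
  exact: le_trans (le1 x) h1.
Qed.

Lemma Pn_compact m : Pcompact p Gn (Pn (Y:=Y) Gn m).
Proof.
case: hG => _ hN _; have [N HN] := hN m.
split; first exact: Pn_bounded.
- apply: cvg_near_cst; exists N => // n /= hn.
  rewrite (_ : _ \o _ = fun _ _ => 0) ?opnorm_zero //.
  apply/funext => x; apply/funext => g; rewrite /= /Pn /IminusPn /Pn.
  case: (asboolP (Gn m g)) => // gm.
  by rewrite (asboolT (HN n hn g gm)) subrr.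
- apply: cvg_near_cst; exists N => // n /= hn.
  rewrite (_ : _ \o _ = fun _ _ => 0) ?opnorm_zero //.
  apply/funext => x; apply/funext => g; rewrite /= /Pn /IminusPn /Pn.
  case: (asboolP (Gn m g)) => gm; last by rewrite if_same subrr.
  by rewrite (asboolT (HN n hn g gm)) subrr.
Qed.

End PcFacts.
Arguments Pn_bounded {R G Y}.
Arguments Pn_compact {R G Y}.

Lemma plim_pt (R : realType) (G : cgroup) (Y : completeNormedModType R[i])
  (p : \bar R) (Gn : nat -> set G) (hp : (1%:E <= p)%E) (hG : admissible_Gn Gn)
  (An : nat -> op G Y) (B : op G Y) :
  Plim p Gn An B ->
  (forall n, exists T, bounded_op p T /\ op_eq p (An n) T) ->
  forall x, inX p x -> forall g (eps : R), 0 < eps ->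
  exists N, forall n, (N <= n)%N -> nY (An n x g - B x g) < eps.
Proof.
move=> [hB HK] hAn x hx g eps e0.
have [m gm] : exists m, Gn m g.
  by case: hG => _ _ U; have : [set: G] g by []; rewrite -U => -[m _ gm]; exists m.
have [L eL] : exists L, lpnorm p x = L%:E.
  move: hx; rewrite /inX; have := lpnorm_ge0 p hp x.
  by case: (lpnorm p x) => // l _ _; exists l.
have L0 : 0 <= L by rewrite -lee_fin -eL lpnorm_ge0.
pose c := (L + 1)^-1.
have c0 : 0 < c by rewrite invr_gt0 ltr_wpDl.
have hcx : inX p (fun g => c%:C%C *: x g) by apply: inX_scale.
have hc1 : (lpnorm p (fun g => c%:C%C *: x g) <= 1)%E.
  rewrite lpnormZ // eL -EFinM lee_fin /c mulrC -/(L / (L + 1)).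
  by rewrite ler_pdivrMr ?ltr_wpDl // mul1r lerDl.
have KC := HK (Pn Gn m) (Pn_compact p Gn hp hG m).
have ce0 : 0 < c * eps by rewrite mulr_gt0.
have := KC [set y | (y < (c * eps)%:E)%E] (@nbhs_open_ereal_lt _ 0 (fun _ => c * eps) ce0).
case=> N _ HN; exists N => n hn.
have := HN n hn; rewrite /= => hlt.
set T1 := opnorm p _ in hlt.
have h1 : (T1 < (c * eps)%:E)%E.
  apply: le_lt_trans hlt; rewrite leeDl //; exact: opnorm_ge0.
have h2 := opnorm_ge p (Pn Gn m \o opsub (An n) B) _ hcx hc1.
have h3 := lpnorm_pt p hp ((Pn Gn m \o opsub (An n) B) (fun g => c%:C%C *: x g)) g.
have [T [hT eT]] := hAn n.
have e1 : (Pn Gn m \o opsub (An n) B) (fun g => c%:C%C *: x g) g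
     = c%:C%C *: (An n x g - B x g).
  rewrite /= /Pn (asboolT gm) /opsub eT // eT // (bo_scale p hp T) //.
  by rewrite (bo_scale p hp B) // scalerBr.
rewrite e1 (nYZ _ _ (ltW c0)) in h3.
have := le_lt_trans (le_trans h3 h2) h1.
by rewrite lte_fin ltr_pM2l.
Qed.
Arguments plim_pt {R G Y p Gn} hp hG {An B}.

Lemma cluster_subseq (R : realType) (Om : pseudoMetricType R) (s : nat -> Om) :
  compact [set: Om] ->
  exists (nu : Om) (nk : nat -> nat), (forall k, (k <= nk k)%N) /\
    (fun k => s (nk k)) @ \oo --> nu.
Proof.
move=> hc.
have [nu [_ cl]] := hc (fmap s \oo) _ filterT.
have ex : forall kN : nat * nat, exists n,
    (kN.2 <= n)%N /\ ball nu (kN.1.+1%:R^-1) (s n).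
  move=> [k N] /=.
  have := cl (s @` [set n | (N <= n)%N]) (ball nu (k.+1%:R^-1)).
  case.
  - by exists N => // n /= hn; exists n.
  - by apply: nbhsx_ballx; rewrite invr_gt0.
  by move=> y [[n hn <-] hb]; exists n.
have [f hf] := choice ex.
pose nk := fix nk k := match k with 0 => f (0, 0)%N | k'.+1 => f (k'.+1, (nk k').+1) end.
have nkge : forall k, (k <= nk k)%N.
  elim=> [//|k ih] /=; have := (hf (k.+1, (nk k).+1)).1 => /= h.
  by apply: leq_trans h; rewrite ltnS.
have nkb : forall k, ball nu (k.+1%:R^-1) (s (nk k)).
  by case=> [|k]; [exact: (hf (0, 0)%N).2|exact: (hf (k.+1, (nk k).+1)).2].
exists nu, nk; split => //.
apply/cvg_ballP => eps e0.
apply: filterS (near_infty_natSinv_lt (PosNum e0)) => k hk.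
exact: le_ball (ltW hk) _ (nkb k).
Qed.
Arguments cluster_subseq {R Om}.

Theorem proposition4p2 (R : realType) (p : \bar R) (G : cgroup)
    (Y : completeNormedModType R[i]) (Gn : nat -> set G)
    (Om : pseudoMetricType R) (alpha : G -> Om -> Om) (A : Om -> op G Y) :
  (1%:E <= p)%E ->
  admissible_Gn Gn ->
  dyn_system alpha ->
  op_family p Gn alpha A ->
  forall w : Om,
    (forall B : op G Y, limop p Gn (A w) B ->
       exists nu, limset alpha w nu /\ op_eq p B (A nu)) /\
    (forall nu, limset alpha w nu -> limop p Gn (A w) (A nu)).
Proof.
move=> hp hG [_ hcomp _ _] [hL hshift hcont] w.
have eA : forall g y, inX p y ->
    (shiftV g \o A w \o shiftV (gopp g)) y = A (alpha g w) y.
  by move=> g y hy; rewrite hshift.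
split.
- move=> B [gs [ginf hPl]].
  pose s := fun n => alpha (gs n) w.
  have [nu [nk [nkge hnu]]] := cluster_subseq s hcomp.
  exists nu; split.
    exists (fun k => gs (nk k)); split => //.
    move=> F fF; have [N _ HN] := ginf F fF; exists N => // k /= hk.
    by apply: HN; exact: leq_trans hk (nkge k).
  move=> x hx; apply/funext => g.
  have hAn : forall n, exists T, bounded_op p T /\
      op_eq p (shiftV (gs n) \o A w \o shiftV (gopp (gs n))) T.
    by move=> n; exists (A (alpha (gs n) w)); split; [exact: (hL _).1|move=> y hy; rewrite eA].
  have P1 := plim_pt hp hG hPl hAn x hx g.
  have hPl2 := hcont (fun k => s (nk k)) nu hnu.
  have hAn2 : forall k, exists T, bounded_op p T /\ op_eq p (A (s (nk k))) T.
    by move=> k; exists (A (s (nk k))); split; [exact: (hL _).1|].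
  have P2 := plim_pt hp hG hPl2 hAn2 x hx g.
  apply/eqP; rewrite -subr_eq0; apply/eqP/nY_eq0/eqP.
  rewrite eq_le nY_ge0 andbT; apply/ler_addgt0Pr => e e0.
  have e20 : 0 < e / 2 by rewrite divr_gt0.
  have [N1 H1] := P1 _ e20; have [N2 H2] := P2 _ e20.
  pose k := maxn N1 N2.
  have h1 := H1 (nk k) (leq_trans (leq_maxl N1 N2) (nkge k)).
  have h2 := H2 k (leq_maxr N1 N2).
  rewrite eA // in h1.
  rewrite add0r; apply/ltW.
  have -> : B x g - A nu x g = (A (s (nk k)) x g - A nu x g) - (A (s (nk k)) x g - B x g).
    by rewrite opprB [RHS]addrC addrA subrK.
  apply: le_lt_trans (nY_triangle _ _) _; rewrite nYN.
  by rewrite [e]splitr ltrD.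
- move=> nu [gs [ginf hcv]]; exists gs; split => //.
  have [hB HK] := hcont _ nu hcv; split => // K hK.
  have := HK K hK.
  suff -> : (fun n => (opnorm p (K \o opsub (shiftV (gs n) \o A w \o shiftV (gopp (gs n))) (A nu))
      + opnorm p (opsub (shiftV (gs n) \o A w \o shiftV (gopp (gs n))) (A nu) \o K))%E)
    = (fun n => (opnorm p (K \o opsub (A (alpha (gs n) w)) (A nu))
      + opnorm p (opsub (A (alpha (gs n) w)) (A nu) \o K))%E) by [].
  apply/funext => n; congr (_ + _)%E; apply: opnorm_ext => y hy.
    by rewrite /= /opsub eA.
  have hKy : inX p (K y) by case: hK => -[hK1 _ _] _ _; exact: hK1.
  by rewrite /= /opsub eA.
Qed.
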